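(* Consider $N$ disturbance-free systems $\dot x_i=f(x_i,u_i)$, $y_i=h(x_i)$, iOFP with some constant $\sigma\in\mathbb R$, over a connected undirected graph with incidence matrix $B$ and $E$ edges. Attach to each edge $g$ a passive system $\dot\eta_g=\psi_g(\eta_g,\varrho_g)$, $v_{1g}=\varphi_g(\eta_g,\varrho_g)$ with $\varrho_g=\sum_j b_{jg}y_j$, $\psi_g$ locally Lipschitz, $\varphi_g$ continuous, and a positive definite $\Psi_g$ with $\dot\Psi_g(\eta_g)\le v_{1g}^\top\varrho_g$. Apply $$\dot\kappa_g=\delta_g\varrho_g^\top\varrho_g,\quad v_{2g}=\kappa_g\varrho_g,\quad \delta_g>0,\quad g=1,\dots,E;\qquad u_i=-\sum_{g=1}^E b_{ig}(v_{1g}+v_{2g}),\quad i=1,\dots,N.$$ If the closed-loop solution $(x,\eta,\kappa)$ is bounded, then the outputs synchronize asymptotically: $\lim_{t\to\infty}\|y_i(t)-\bar y(t)\|=0$ for all $i$, where $\bar y=\frac1N\sum_j y_j$ (no condition relating $\lambda_2$ and $\sigma$ is required).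
   Context: $x_i\in\mathbb R^n$, $u_i,y_i\in\mathbb R^q$, $f$ locally Lipschitz, $h$ continuously differentiable. iOFP with constant $\sigma$ (disturbance-free): there exist continuously differentiable $\Phi\ge0$ and class-$\mathcal K_\infty$ $\underline\alpha,\overline\alpha$ with $\underline\alpha(\|x_i-x_i'\|)\le\Phi(x_i,x_i')\le\overline\alpha(\|x_i-x_i'\|)$ and $\frac{\partial\Phi}{\partial x_i}f(x_i,u_i)+\frac{\partial\Phi}{\partial x_i'}f(x_i',u_i')\le\sigma\|y_i-y_i'\|^2+(y_i-y_i')^\top(u_i-u_i')$. Graph: symmetric nonnegative adjacency $A=[a_{ij}]$, connected. Incidence matrix $B\in\mathbb R^{N\times E}$: for the $g$-th edge $(i,j)$, $b_{ig}=-\sqrt{a_{ij}}$, $b_{jg}=\sqrt{a_{ij}}$, other entries zero. *)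

(* Defs.v *)
From Stdlib Require Import Reals Lra Relations.
Open Scope R_scope.

(* Vectors in R^d are represented as functions nat -> R; only the
   components 0..d-1 are meaningful, and all norms/inner products
   below are taken over these components. *)
Definition vec := nat -> R.

Fixpoint sumR (n : nat) (F : nat -> R) : R :=
  match n with O => 0 | S k => sumR k F + F k end.

Definition dot (d : nat) (x y : vec) : R := sumR d (fun k => x k * y k).
Definition vnorm (d : nat) (x : vec) : R := sqrt (dot d x x).
Definition vadd (x y : vec) : vec := fun k => x k + y k.
Definition vsub (x y : vec) : vec := fun k => x k - y k.
Definition vzero : vec := fun _ => 0.

Definition continuous_map (d e : nat) (F : vec -> vec) : Prop :=
  forall x eps, eps > 0 -> exists del, del > 0 /\
    forall x', vnorm d (vsub x' x) < del -> vnorm e (vsub (F x') (F x)) < eps.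

Definition continuous_map2 (d p e : nat) (F : vec -> vec -> vec) : Prop :=
  forall x u eps, eps > 0 -> exists del, del > 0 /\
    forall x' u', vnorm d (vsub x' x) < del -> vnorm p (vsub u' u) < del ->
      vnorm e (vsub (F x' u') (F x u)) < eps.

Definition loc_lipschitz2 (d p e : nat) (F : vec -> vec -> vec) : Prop :=
  forall x u, exists r L, r > 0 /\
    forall x1 u1 x2 u2,
      vnorm d (vsub x1 x) < r -> vnorm p (vsub u1 u) < r ->
      vnorm d (vsub x2 x) < r -> vnorm p (vsub u2 u) < r ->
      vnorm e (vsub (F x1 u1) (F x2 u2)) <= L * (vnorm d (vsub x1 x2) + vnorm p (vsub u1 u2)).

Definition has_gradient (d : nat) (F : vec -> R) (G : vec -> vec) : Prop :=
  forall x eps, eps > 0 -> exists del, del > 0 /\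
    forall dx, vnorm d dx < del ->
      Rabs (F (vadd x dx) - F x - dot d (G x) dx) <= eps * vnorm d dx.

Definition C1 (d : nat) (F : vec -> R) : Prop :=
  exists G, has_gradient d F G /\ continuous_map d d G.

Definition C1_map (d e : nat) (h : vec -> vec) : Prop :=
  forall k, (k < e)%nat -> C1 d (fun x => h x k).

Definition has_gradient2 (d : nat) (Phi : vec -> vec -> R) (Gx Gx' : vec -> vec -> vec) : Prop :=
  forall x x' eps, eps > 0 -> exists del, del > 0 /\
    forall dx dx', vnorm d dx < del -> vnorm d dx' < del ->
      Rabs (Phi (vadd x dx) (vadd x' dx') - Phi x x'
            - dot d (Gx x x') dx - dot d (Gx' x x') dx')
        <= eps * (vnorm d dx + vnorm d dx').

Definition Kinf (al : R -> R) : Prop :=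
  al 0 = 0 /\
  (forall s, 0 <= s -> forall eps, eps > 0 -> exists del, del > 0 /\
     forall s', 0 <= s' -> Rabs (s' - s) < del -> Rabs (al s' - al s) < eps) /\
  (forall a b, 0 <= a -> a < b -> al a < al b) /\
  (forall M, exists s, 0 <= s /\ M <= al s).

Definition iOFP (n q : nat) (f : vec -> vec -> vec) (h : vec -> vec) (sigma : R) : Prop :=
  exists (Phi : vec -> vec -> R) (Gx Gx' : vec -> vec -> vec) (alo ahi : R -> R),
    has_gradient2 n Phi Gx Gx' /\ continuous_map2 n n n Gx /\ continuous_map2 n n n Gx' /\
    Kinf alo /\ Kinf ahi /\
    (forall x x', alo (vnorm n (vsub x x')) <= Phi x x' <= ahi (vnorm n (vsub x x'))) /\
    (forall x x' u u',
       dot n (Gx x x') (f x u) + dot n (Gx' x x') (f x' u')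
       <= sigma * (vnorm q (vsub (h x) (h x'))) ^ 2
          + dot q (vsub (h x) (h x')) (vsub u u')).

Definition sym_nonneg (N : nat) (a : nat -> nat -> R) : Prop :=
  forall i j, (i < N)%nat -> (j < N)%nat -> a i j = a j i /\ 0 <= a i j.

Definition graph_connected (N : nat) (a : nat -> nat -> R) : Prop :=
  forall i j, (i < N)%nat -> (j < N)%nat ->
    clos_refl_trans nat
      (fun u v => (u < N)%nat /\ (v < N)%nat /\ u <> v /\ a u v > 0) i j.

Definition edge_enum (N E : nat) (a : nat -> nat -> R) (src dst : nat -> nat) : Prop :=
  (forall g, (g < E)%nat ->
     (src g < N)%nat /\ (dst g < N)%nat /\ src g <> dst g /\ a (src g) (dst g) > 0) /\
  (forall i j, (i < N)%nat -> (j < N)%nat -> i <> j -> a i j > 0 ->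
     exists g, (g < E)%nat /\ ((src g = i /\ dst g = j) \/ (src g = j /\ dst g = i))) /\
  (forall g g', (g < E)%nat -> (g' < E)%nat ->
     ((src g = src g' /\ dst g = dst g') \/ (src g = dst g' /\ dst g = src g')) -> g = g').

Definition incidence (a : nat -> nat -> R) (src dst : nat -> nat) (i g : nat) : R :=
  if Nat.eq_dec i (src g) then - sqrt (a (src g) (dst g))
  else if Nat.eq_dec i (dst g) then sqrt (a (src g) (dst g))
  else 0.

Definition passive_edge (m q : nat) (psi phi : vec -> vec -> vec) : Prop :=
  loc_lipschitz2 m q m psi /\ continuous_map2 m q q phi /\
  exists (Psi : vec -> R) (GPsi : vec -> vec),
    has_gradient m Psi GPsi /\ continuous_map m m GPsi /\
    Psi vzero = 0 /\ (forall eta, vnorm m eta <> 0 -> Psi eta > 0) /\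
    (forall eta rho, dot m (GPsi eta) (psi eta rho) <= dot q (phi eta rho) rho).

Definition rho_sig (q N : nat) (b : nat -> nat -> R) (h : vec -> vec)
  (x : nat -> R -> vec) (g : nat) (t : R) : vec :=
  fun k => sumR N (fun j => b j g * h (x j t) k).

Definition u_sig (q N E : nat) (b : nat -> nat -> R) (h : vec -> vec)
  (phi : nat -> vec -> vec -> vec) (x eta : nat -> R -> vec) (kappa : nat -> R -> R)
  (i : nat) (t : R) : vec :=
  fun k => - sumR E (fun g =>
     b i g * (phi g (eta g t) (rho_sig q N b h x g t) k
              + kappa g t * rho_sig q N b h x g t k)).

Definition closed_loop_solution (n q N E : nat) (f : vec -> vec -> vec) (h : vec -> vec)
  (b : nat -> nat -> R) (m : nat -> nat) (psi phi : nat -> vec -> vec -> vec)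
  (delta : nat -> R) (x eta : nat -> R -> vec) (kappa : nat -> R -> R) : Prop :=
  forall t, t > 0 ->
    (forall i k, (i < N)%nat -> (k < n)%nat ->
       derivable_pt_lim (fun s => x i s k) t
         (f (x i t) (u_sig q N E b h phi x eta kappa i t) k)) /\
    (forall g k, (g < E)%nat -> (k < m g)%nat ->
       derivable_pt_lim (fun s => eta g s k) t
         (psi g (eta g t) (rho_sig q N b h x g t) k)) /\
    (forall g, (g < E)%nat ->
       derivable_pt_lim (kappa g) t
         (delta g * dot q (rho_sig q N b h x g t) (rho_sig q N b h x g t))).

Definition bounded_solution (n N E : nat) (m : nat -> nat)
  (x eta : nat -> R -> vec) (kappa : nat -> R -> R) : Prop :=
  exists M, forall t, t >= 0 ->
    (forall i k, (i < N)%nat -> (k < n)%nat -> Rabs (x i t k) <= M) /\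
    (forall g k, (g < E)%nat -> (k < m g)%nat -> Rabs (eta g t k) <= M) /\
    (forall g, (g < E)%nat -> Rabs (kappa g t) <= M).

Definition ybar (N : nat) (h : vec -> vec) (x : nat -> R -> vec) (t : R) : vec :=
  fun k => / INR N * sumR N (fun j => h (x j t) k).

(* Main.v *)
Require Import Defs.
From Stdlib Require Import Reals Lra Lia Relations Classical FunctionalExtensionality.
Open Scope R_scope.

Lemma sumR_ext n F G : (forall k, (k < n)%nat -> F k = G k) -> sumR n F = sumR n G.
Proof. induction n; simpl; intros H; auto. rewrite IHn by (intros; apply H; lia). rewrite H by lia. auto. Qed.

Lemma sumR_le n F G : (forall k, (k < n)%nat -> F k <= G k) -> sumR n F <= sumR n G.
Proof. induction n; simpl; intros H; try lra. assert (F n <= G n) by (apply H; lia).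
 assert (sumR n F <= sumR n G) by (apply IHn; intros; apply H; lia). lra. Qed.

Lemma sumR_nonneg n F : (forall k, (k < n)%nat -> 0 <= F k) -> 0 <= sumR n F.
Proof. intros H. replace 0 with (sumR n (fun _ => 0)). apply sumR_le; auto.
 induction n; simpl; auto. rewrite IHn; try lra. intros; apply H; lia. Qed.

Lemma sumR_const n c : sumR n (fun _ => c) = INR n * c.
Proof. induction n; simpl sumR; [simpl; lra|]. rewrite IHn, S_INR. lra. Qed.

Lemma sumR_plus n F G : sumR n (fun k => F k + G k) = sumR n F + sumR n G.
Proof. induction n; simpl; [lra|]. rewrite IHn. lra. Qed.

Lemma sumR_minus n F G : sumR n (fun k => F k - G k) = sumR n F - sumR n G.
Proof. induction n; simpl; [lra|]. rewrite IHn. lra. Qed.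

Lemma sumR_scal n c F : sumR n (fun k => c * F k) = c * sumR n F.
Proof. induction n; simpl; [lra|]. rewrite IHn. lra. Qed.

Lemma Rabs_sumR n F : Rabs (sumR n F) <= sumR n (fun k => Rabs (F k)).
Proof. induction n; simpl. rewrite Rabs_R0; lra.
 eapply Rle_trans. apply Rabs_triang. lra. Qed.

Lemma term_le_sumR n F k : (forall j, (j < n)%nat -> 0 <= F j) -> (k < n)%nat -> F k <= sumR n F.
Proof. induction n; intros H Hk; [lia|]. simpl.
 destruct (Nat.eq_dec k n). subst. assert (0 <= sumR n F) by (apply sumR_nonneg; intros; apply H; lia). lra.
 assert (F k <= sumR n F) by (apply IHn; [intros; apply H; lia| lia]). assert (0 <= F n) by (apply H; lia). lra. Qed.

Lemma sumR_split m q F : sumR (m + q) F = sumR m F + sumR q (fun k => F (m + k)%nat).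
Proof. induction q; simpl. rewrite Nat.add_0_r; lra. rewrite Nat.add_succ_r. simpl. rewrite IHq. lra. Qed.

Lemma sumR_single N p F : (p < N)%nat ->
  sumR N (fun j => if Nat.eq_dec j p then F j else 0) = F p.
Proof. induction N; intros Hp; [lia|]. simpl. destruct (Nat.eq_dec N p).
 subst. rewrite (sumR_ext _ _ (fun _ => 0)). rewrite sumR_const; lra.
 intros k Hk; destruct (Nat.eq_dec k p); [lia|auto].
 rewrite IHN by lia. lra. Qed.

Definition l1 (d : nat) (v : vec) : R := sumR d (fun k => Rabs (v k)).
Definition inbox (d : nat) (M : R) (x : vec) : Prop := forall k, (k < d)%nat -> Rabs (x k) <= M.
Definition agree (d : nat) (x y : vec) : Prop := forall k, (k < d)%nat -> x k = y k.

Lemma l1_nonneg d v : 0 <= l1 d v.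
Proof. apply sumR_nonneg. intros; apply Rabs_pos. Qed.

Lemma dot_self_nonneg d v : 0 <= dot d v v.
Proof. apply sumR_nonneg. intros; apply Rle_0_sqr. Qed.

Lemma abs_le_vnorm d v k : (k < d)%nat -> Rabs (v k) <= vnorm d v.
Proof. intros Hk. unfold vnorm. rewrite <- sqrt_Rsqr_abs. apply sqrt_le_1_alt.
 unfold dot, Rsqr. apply (term_le_sumR d (fun k => v k * v k)); auto. intros; apply Rle_0_sqr. Qed.

Lemma abs_le_l1 d v k : (k < d)%nat -> Rabs (v k) <= l1 d v.
Proof. intros Hk. unfold l1. apply (term_le_sumR d (fun k => Rabs (v k))); auto. intros; apply Rabs_pos. Qed.

Lemma vnorm_le_l1 d v : vnorm d v <= l1 d v.
Proof. unfold vnorm. rewrite <- (sqrt_square (l1 d v)) by apply l1_nonneg. apply sqrt_le_1_alt.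
 induction d. unfold dot, l1; simpl; lra.
 unfold dot, l1 in *; simpl. set (A := sumR d (fun k => Rabs (v k))) in *.
 assert (0 <= A) by apply l1_nonneg. assert (0 <= Rabs (v d)) by apply Rabs_pos.
 assert (v d * v d = Rabs (v d) * Rabs (v d)). { rewrite <- Rabs_mult. rewrite Rabs_right; auto. apply Rle_ge, Rle_0_sqr. }
 nra. Qed.

Lemma vnorm_nonneg d v : 0 <= vnorm d v.
Proof. apply sqrt_pos. Qed.

Lemma l1_triangle d x y z : l1 d (vsub x z) <= l1 d (vsub x y) + l1 d (vsub y z).
Proof. unfold l1. rewrite <- sumR_plus. apply sumR_le. intros k _. unfold vsub.
 replace (x k - z k) with ((x k - y k) + (y k - z k)) by ring. apply Rabs_triang. Qed.

Lemma l1_sym d x y : l1 d (vsub x y) = l1 d (vsub y x).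
Proof. apply sumR_ext. intros; unfold vsub; apply Rabs_minus_sym. Qed.

Lemma l1_le_bound d v c : (forall k, (k < d)%nat -> Rabs (v k) <= c) -> l1 d v <= INR d * c.
Proof. intros H. rewrite <- sumR_const. apply sumR_le; auto. Qed.

Lemma l1_agree d x x' y : agree d x x' -> l1 d (vsub x y) = l1 d (vsub x' y).
Proof. intros H. apply sumR_ext. intros k Hk. unfold vsub. rewrite H; auto. Qed.

Lemma vnorm_agree0 d x y : agree d x y -> vnorm d (vsub x y) = 0.
Proof. intros H. apply Rle_antisym; [|apply vnorm_nonneg]. eapply Rle_trans. apply vnorm_le_l1.
 unfold l1. rewrite (sumR_ext _ _ (fun _ => 0)). rewrite sumR_const; lra.
 intros k Hk; unfold vsub; rewrite H; auto. rewrite Rminus_diag, Rabs_R0; auto. Qed.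

Lemma dot_bound d u v : Rabs (dot d u v) <= l1 d u * vnorm d v.
Proof. unfold dot, l1. eapply Rle_trans. apply Rabs_sumR. rewrite Rmult_comm, <- sumR_scal.
 apply sumR_le. intros k Hk. rewrite Rabs_mult. rewrite Rmult_comm. apply Rmult_le_compat_r. apply Rabs_pos.
 apply abs_le_vnorm; auto. Qed.

Lemma dot_agree0 d u v : agree d v vzero -> dot d u v = 0.
Proof. intros H. unfold dot. rewrite (sumR_ext _ _ (fun _ => 0)). rewrite sumR_const; lra.
 intros k Hk. rewrite H by auto. unfold vzero; ring. Qed.

Lemma FIN (P : nat -> R -> Prop) : (forall k B B', P k B -> B <= B' -> P k B') ->
  forall E, (forall g, (g < E)%nat -> exists B, P g B) -> exists B, forall g, (g < E)%nat -> P g B.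
Proof. intros Hm E. induction E; intros H. exists 0; intros; lia.
 destruct IHE as [B1 HB1]. intros; apply H; lia. destruct (H E) as [B2 HB2]. lia.
 exists (Rmax B1 B2). intros g Hg. destruct (Nat.eq_dec g E). subst. eapply Hm; eauto. apply Rmax_r.
 eapply Hm. apply HB1; lia. apply Rmax_l. Qed.

Lemma abs_le_split x b : Rabs x <= b -> -b <= x <= b.
Proof. unfold Rabs; destruct Rcase_abs; lra. Qed.
Lemma abs_lt_split x b : Rabs x < b -> -b < x < b.
Proof. unfold Rabs; destruct Rcase_abs; lra. Qed.

Definition monoR {T} (P : T -> R -> Prop) := forall x B B', P x B -> B <= B' -> P x B'.

Lemma L1D (P : R -> R -> Prop) : monoR P ->
  (forall t, exists r B, r > 0 /\ forall t', Rabs (t' - t) < r -> P t' B) ->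
  forall a b, exists B, forall t, a <= t <= b -> P t B.
Proof.
  intros Hm Hl a b. destruct (Rlt_or_le b a) as [Hba|Hab].
  { exists 0. intros; lra. }
  set (S := fun s => a <= s <= b /\ exists B, forall t, a <= t <= s -> P t B).
  assert (HSa : S a).
  { destruct (Hl a) as [r [B [Hr HB]]]. split. lra. exists B. intros t Ht.
    apply HB. replace (t - a) with 0 by lra. rewrite Rabs_R0; lra. }
  destruct (completeness S) as [c [Hub Hlub]].
  { exists b. intros s [Hs _]. lra. }
  { exists a; auto. }
  assert (Hac : a <= c) by (apply Hub; auto).
  assert (Hcb : c <= b). { apply Hlub. intros s [Hs _]. lra. }
  destruct (Hl c) as [r [B0 [Hr HB0]]].
  assert (Hs : exists s, S s /\ s > c - r).
  { apply NNPP; intros Hn. assert (c <= c - r). apply Hlub. intros s Hs.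
    apply Rnot_lt_le. intros Hlt. apply Hn. exists s. split; auto. lra. }
  destruct Hs as [s [[Hs1 [B1 HB1]] Hs2]].
  set (s' := Rmin (c + r/2) b).
  assert (HS' : forall t, a <= t <= s' -> P t (Rmax B0 B1)).
  { intros t Ht. destruct (Rle_or_lt t s).
    - eapply Hm. apply HB1; lra. apply Rmax_r.
    - eapply Hm. apply HB0. assert (t <= c + r/2). { eapply Rle_trans. apply Ht. apply Rmin_l. }
      apply Rabs_def1; lra. apply Rmax_l. }
  assert (Hb : b <= s').
  { unfold s', Rmin. destruct (Rle_dec (c + r/2) b); [|lra].
    assert (c + r/2 <= c). apply Hub. split. lra. exists (Rmax B0 B1). intros t Ht. apply HS'.
    unfold s', Rmin. destruct (Rle_dec (c + r / 2) b); lra. lra. }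
  exists (Rmax B0 B1). intros t Ht. apply HS'. lra.
Qed.

Definition upd (x : vec) (d : nat) (t : R) : vec := fun k => if Nat.eq_dec k d then t else x k.

Lemma SD d : forall (P : vec -> R -> Prop), monoR P ->
  (forall x, exists r B, r > 0 /\ forall y, l1 d (vsub y x) < r -> P y B) ->
  forall M, exists B, forall x, inbox d M x -> P x B.
Proof.
  induction d; intros P Hm Hl M.
  - destruct (Hl vzero) as [r [B [Hr HB]]]. exists B. intros x _. apply HB.
    unfold l1; simpl; lra.
  -
    set (Q := fun x B => forall y, agree d y x -> Rabs (y d) <= M -> P y B).
    destruct (IHd Q) with (M := M) as [B2 HB2].
    + intros x B B' H HB y Hy Hyd. eapply Hm; eauto.
    + intros x.
      set (P' := fun t B => 0 < B /\ forall y, l1 d (vsub y x) < / B -> y d = t -> P y B).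
      destruct (L1D P') with (a := -M) (b := M) as [B1 HB1].
      * intros t B B' [H0 H] HB. split. lra. intros y Hy Hyd. eapply Hm. apply H; auto.
        eapply Rlt_le_trans. apply Hy. apply Rinv_le_contravar; lra. auto.
      * intros t. destruct (Hl (upd x d t)) as [r [B0 [Hr HB0]]].
        set (B := Rmax (Rmax B0 (2 / r)) 1).
        assert (HB1 : 1 <= B) by apply Rmax_r.
        assert (HB2 : 2 / r <= B) by (eapply Rle_trans; [apply Rmax_r| apply Rmax_l]).
        assert (HB3 : B0 <= B) by (eapply Rle_trans; [apply Rmax_l| apply Rmax_l]).
        exists (r/2), B. split. lra. intros t' Ht'. split. lra. intros y Hy Hyd.
        eapply Hm; [|apply HB3]. apply HB0. unfold l1. simpl.
        assert (E1 : sumR d (fun k => Rabs (vsub y (upd x d t) k)) = l1 d (vsub y x)).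
        { apply sumR_ext. intros k Hk. unfold vsub, upd. destruct (Nat.eq_dec k d); [lia|auto]. }
        rewrite E1. replace (vsub y (upd x d t) d) with (t' - t).
        2:{ unfold vsub, upd. destruct (Nat.eq_dec d d); [|lia]. rewrite Hyd. auto. }
        assert (/ B <= r / 2).
        { replace (r/2) with (/ (2 / r)) by (field; lra). apply Rinv_le_contravar. apply Rdiv_lt_0_compat; lra. auto. }
        lra.
      * destruct (Rle_or_lt 0 M) as [HM|HM].
        -- destruct (HB1 0) as [HB1p _]. lra.
           exists (/ B1), B1. split. apply Rinv_0_lt_compat; lra.
           intros y Hy z Hz Hzd. destruct (HB1 (z d)) as [_ H]. apply abs_le_split in Hzd; lra.
           apply H; auto. rewrite (l1_agree d z y x); auto.
        -- exists 1, 0. split. lra. intros y _ z _ Hzd. pose proof (Rabs_pos (z d)). lra.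
    + exists B2. intros x Hx. apply (HB2 x). intros k Hk; apply Hx; lia. intros k Hk; auto. apply Hx; lia.
Qed.

Lemma vsub_comp_bound e v w k : (k < e)%nat -> Rabs (v k) <= l1 e w + vnorm e (vsub v w).
Proof. intros Hk. replace (v k) with (w k + vsub v w k) by (unfold vsub; ring).
 eapply Rle_trans. apply Rabs_triang. apply Rplus_le_compat. apply abs_le_l1; auto. apply abs_le_vnorm; auto. Qed.

Lemma l1_split d p v : l1 (d + p) v = l1 d v + l1 p (fun k => v (d + k)%nat).
Proof. unfold l1. apply sumR_split. Qed.

Lemma BOX2 d p e (F : vec -> vec -> vec) :
  (forall x u, exists r C, r > 0 /\ forall x' u', vnorm d (vsub x' x) < r -> vnorm p (vsub u' u) < r ->
       vnorm e (vsub (F x' u') (F x u)) <= C) ->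
  (forall x x' u u', agree d x' x -> agree p u' u -> agree e (F x' u') (F x u)) ->
  forall M1 M2, exists B, forall x u, inbox d M1 x -> inbox p M2 u -> forall k, (k < e)%nat -> Rabs (F x u k) <= B.
Proof.
  intros Hl Hag M1 M2.
  set (sh := fun (z : vec) => fun k => z (d + k)%nat).
  destruct (SD (d + p) (fun z B => forall k, (k < e)%nat -> Rabs (F z (sh z) k) <= B)) with (M := Rmax M1 M2) as [B HB].
  - intros z B B' H HB k Hk. eapply Rle_trans; [apply H; auto| auto].
  - intros z. destruct (Hl z (sh z)) as [r [C [Hr HC]]]. exists r, (l1 e (F z (sh z)) + C). split; auto.
    intros y Hy k Hk. eapply Rle_trans. apply (vsub_comp_bound e _ (F z (sh z))); auto.
    apply Rplus_le_compat_l. rewrite l1_split in Hy.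
    pose proof (l1_nonneg d (vsub y z)). pose proof (l1_nonneg p (fun k => vsub y z (d + k)%nat)).
    apply HC.
    + eapply Rle_lt_trans. apply vnorm_le_l1. lra.
    + eapply Rle_lt_trans. apply vnorm_le_l1.
      assert (E : l1 p (vsub (sh y) (sh z)) = l1 p (fun k => vsub y z (d + k)%nat)) by reflexivity. lra.
  - exists B. intros x u Hx Hu k Hk.
    set (z := fun k => if Compare_dec.lt_dec k d then x k else u (k - d)%nat).
    assert (Hz : inbox (d + p) (Rmax M1 M2) z).
    { intros j Hj. unfold z. destruct (Compare_dec.lt_dec j d).
      eapply Rle_trans. apply Hx; auto. apply Rmax_l.
      eapply Rle_trans. apply Hu; lia. apply Rmax_r. }
    assert (H1 : agree d z x).
    { intros j Hj. unfold z. destruct (Compare_dec.lt_dec j d); [auto|lia]. }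
    assert (H2 : agree p (sh z) u).
    { intros j Hj. unfold sh, z. destruct (Compare_dec.lt_dec (d + j) d); [lia|]. f_equal; lia. }
    rewrite <- (Hag x z u (sh z) H1 H2 k Hk). apply HB; auto.
Qed.

Lemma UCbox d (G : vec -> R) :
  (forall x eps, eps > 0 -> exists del, del > 0 /\ forall x', l1 d (vsub x' x) < del -> Rabs (G x' - G x) < eps) ->
  forall M eps, eps > 0 -> exists del, del > 0 /\ forall x x', inbox d M x -> l1 d (vsub x' x) < del -> Rabs (G x' - G x) < eps.
Proof.
  intros Hc M eps Heps.
  destruct (SD d (fun x B => B > 0 /\ forall x', l1 d (vsub x' x) < / B -> Rabs (G x' - G x) < eps)) with (M := M) as [B HB].
  - intros x B B' [H0 H] HB. split. lra. intros x' Hx'. apply H. eapply Rlt_le_trans. apply Hx'. apply Rinv_le_contravar; lra.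
  - intros x0. destruct (Hc x0 (eps/2)) as [d0 [Hd0 H0]]. lra.
    exists (d0/2), (Rmax (2/d0) 1). split. lra. intros y Hy.
    assert (Hp : Rmax (2/d0) 1 > 0). { pose proof (Rmax_r (2/d0) 1). lra. }
    split; auto. intros x' Hx'.
    assert (/ Rmax (2 / d0) 1 <= d0/2).
    { replace (d0/2) with (/ (2/d0)) by (field; lra). apply Rinv_le_contravar. apply Rdiv_lt_0_compat; lra. apply Rmax_l. }
    pose proof (l1_triangle d x' y x0).
    assert (A1 : Rabs (G x' - G x0) < eps/2) by (apply H0; lra).
    assert (A2 : Rabs (G y - G x0) < eps/2) by (apply H0; lra).
    replace (G x' - G y) with ((G x' - G x0) - (G y - G x0)) by ring.
    eapply Rle_lt_trans. apply Rabs_triang. rewrite Rabs_Ropp. lra.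
  - destruct (Rle_or_lt 0 M) as [HM|HM].
    + destruct (HB vzero) as [Hp H]. intros k _. unfold vzero. rewrite Rabs_R0. auto.
      exists (/ B). split. apply Rinv_0_lt_compat; lra. intros x x' Hx Hl. apply HB; auto.
    + destruct (Nat.eq_dec d 0).
      * subst. destruct (HB vzero) as [Hp H]. intros k Hk; lia.
        exists (/ B). split. apply Rinv_0_lt_compat; lra. intros x x' Hx Hl. apply HB; auto.
      * exists 1. split. lra. intros x x' Hx. exfalso. pose proof (Hx 0%nat ltac:(lia)). pose proof (Rabs_pos (x 0%nat)). lra.
Qed.

Lemma vnorm1 v : vnorm 1 v = Rabs (v 0%nat).
Proof. unfold vnorm, dot. simpl. rewrite Rplus_0_l. rewrite <- sqrt_Rsqr_abs. reflexivity. Qed.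

Section H.
Variables (n : nat) (hk : vec -> R).
Hypothesis HC : Defs.C1 n hk.

Lemma hk_agree x x' : agree n x' x -> hk x' = hk x.
Proof.
  intros Hag. destruct HC as [G [Hg _]].
  assert (forall eps, eps > 0 -> Rabs (hk x' - hk x) <= eps).
  { intros eps He. destruct (Hg x eps He) as [del [Hd H]].
    assert (E : vadd x (vsub x' x) = x'). { apply functional_extensionality; intros k; unfold vadd, vsub; ring. }
    specialize (H (vsub x' x)). rewrite E in H. rewrite (vnorm_agree0 n x' x Hag) in H.
    rewrite dot_agree0 in H. replace (hk x' - hk x - 0) with (hk x' - hk x) in H by ring.
    specialize (H Hd). lra. intros k Hk. unfold vsub, vzero. rewrite Hag; auto; ring. }
  assert (Rabs (hk x' - hk x) = 0).
  { apply Rle_antisym. apply Rnot_lt_le. intros Hl. specialize (H (Rabs (hk x' - hk x) / 2)). lra. apply Rabs_pos. }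
  destruct (Req_dec (hk x' - hk x) 0). lra. apply Rabs_no_R0 in H1. lra.
Qed.

Lemma hk_loc x : exists r L, r > 0 /\ L >= 0 /\ forall x', vnorm n (vsub x' x) < r ->
  Rabs (hk x' - hk x) <= L * vnorm n (vsub x' x).
Proof.
  destruct HC as [G [Hg _]]. destruct (Hg x 1) as [del [Hd H]]. lra.
  exists del, (1 + l1 n (G x)). split; auto. split. pose proof (l1_nonneg n (G x)). lra.
  intros x' Hx'. specialize (H (vsub x' x) Hx').
  assert (E : vadd x (vsub x' x) = x'). { apply functional_extensionality; intros k; unfold vadd, vsub; ring. }
  rewrite E in H. pose proof (dot_bound n (G x) (vsub x' x)).
  replace (hk x' - hk x) with ((hk x' - hk x - dot n (G x) (vsub x' x)) + dot n (G x) (vsub x' x)) by ring.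
  eapply Rle_trans. apply Rabs_triang. lra.
Qed.

Lemma hk_cont x eps : eps > 0 -> exists del, del > 0 /\ forall x', l1 n (vsub x' x) < del -> Rabs (hk x' - hk x) < eps.
Proof.
  intros He. destruct (hk_loc x) as [r [L [Hr [HL H]]]].
  exists (Rmin r (eps / (L + 1))). split. apply Rmin_glb_lt; auto. apply Rdiv_lt_0_compat; lra.
  intros x' Hx'. pose proof (vnorm_le_l1 n (vsub x' x)). pose proof (vnorm_nonneg n (vsub x' x)).
  pose proof (Rmin_l r (eps / (L+1))). pose proof (Rmin_r r (eps / (L+1))).
  eapply Rle_lt_trans. apply H. lra.
  assert (vnorm n (vsub x' x) < eps / (L+1)) by lra.
  apply (Rmult_lt_compat_l (L+1)) in H4; [|lra]. replace ((L+1) * (eps / (L+1))) with eps in H4 by (field; lra). nra.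
Qed.

End H.

Definition UCf (F : R -> R) : Prop := forall eps, eps > 0 -> exists del, del > 0 /\
  forall t s, 1 <= t -> 1 <= s -> Rabs (t - s) < del -> Rabs (F t - F s) < eps.

Lemma UC_plus F G : UCf F -> UCf G -> UCf (fun t => F t + G t).
Proof. intros HF HG eps He. destruct (HF (eps/2)) as [d1 [Hd1 H1]]. lra. destruct (HG (eps/2)) as [d2 [Hd2 H2]]. lra.
 exists (Rmin d1 d2). split. apply Rmin_glb_lt; auto. intros t s Ht Hs Hts.
 pose proof (Rmin_l d1 d2). pose proof (Rmin_r d1 d2).
 replace (F t + G t - (F s + G s)) with ((F t - F s) + (G t - G s)) by ring.
 eapply Rle_lt_trans. apply Rabs_triang. assert (Rabs (F t - F s) < eps/2) by (apply H1; auto; lra).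
 assert (Rabs (G t - G s) < eps/2) by (apply H2; auto; lra). lra. Qed.

Lemma UC_const c : UCf (fun _ => c).
Proof. intros eps He. exists 1. split. lra. intros. rewrite Rminus_diag, Rabs_R0. lra. Qed.

Lemma UC_sum N (F : nat -> R -> R) : (forall j, (j < N)%nat -> UCf (F j)) -> UCf (fun t => sumR N (fun j => F j t)).
Proof. induction N; intros H. simpl. apply UC_const. simpl. apply (UC_plus (fun t => sumR N (fun j => F j t)) (F N)).
 apply IHN; intros; apply H; lia. apply H; lia. Qed.

Lemma UC_mult F G A : UCf F -> UCf G -> (forall t, 1 <= t -> Rabs (F t) <= A) -> (forall t, 1 <= t -> Rabs (G t) <= A) ->
  UCf (fun t => F t * G t).
Proof. intros HF HG BF BG eps He.
 assert (HA : 0 < Rabs A + 1) by (pose proof (Rabs_pos A); lra).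
 set (e' := eps / (2 * (Rabs A + 1))). assert (He' : e' > 0) by (unfold e'; apply Rdiv_lt_0_compat; lra).
 destruct (HF e') as [d1 [Hd1 H1]]; auto. destruct (HG e') as [d2 [Hd2 H2]]; auto.
 exists (Rmin d1 d2). split. apply Rmin_glb_lt; auto. intros t s Ht Hs Hts.
 pose proof (Rmin_l d1 d2). pose proof (Rmin_r d1 d2).
 assert (A1 : Rabs (F t - F s) < e') by (apply H1; auto; lra).
 assert (A2 : Rabs (G t - G s) < e') by (apply H2; auto; lra).
 replace (F t * G t - F s * G s) with (F t * (G t - G s) + G s * (F t - F s)) by ring.
 eapply Rle_lt_trans. apply Rabs_triang. rewrite !Rabs_mult.
 assert (Rabs (F t) <= Rabs A + 1) by (pose proof (BF t Ht); pose proof (Rle_abs A); lra).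
 assert (Rabs (G s) <= Rabs A + 1) by (pose proof (BG s Hs); pose proof (Rle_abs A); lra).
 assert (Rabs (F t) * Rabs (G t - G s) <= (Rabs A + 1) * Rabs (G t - G s)).
 { apply Rmult_le_compat_r; [apply Rabs_pos|lra]. }
 assert (Rabs (G s) * Rabs (F t - F s) <= (Rabs A + 1) * Rabs (F t - F s)).
 { apply Rmult_le_compat_r; [apply Rabs_pos|lra]. }
 assert ((Rabs A + 1) * Rabs (G t - G s) < (Rabs A + 1) * e') by (apply Rmult_lt_compat_l; lra).
 assert ((Rabs A + 1) * Rabs (F t - F s) < (Rabs A + 1) * e') by (apply Rmult_lt_compat_l; lra).
 assert ((Rabs A + 1) * e' = eps / 2) by (unfold e'; field; lra).
 lra. Qed.

Lemma UC_scal c F : UCf F -> UCf (fun t => c * F t).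
Proof. intros HF eps He. destruct (HF (eps / (Rabs c + 1))) as [d [Hd H]]. apply Rdiv_lt_0_compat; auto. pose proof (Rabs_pos c); lra.
 exists d. split; auto. intros t s Ht Hs Hts. replace (c * F t - c * F s) with (c * (F t - F s)) by ring.
 rewrite Rabs_mult. specialize (H t s Ht Hs Hts). pose proof (Rabs_pos c). pose proof (Rabs_pos (F t - F s)).
 assert ((Rabs c + 1) * (eps / (Rabs c + 1)) = eps) by (field; lra). nra. Qed.

Lemma kappa_mono (kap ph : R -> R) dl : dl > 0 ->
  (forall t, t > 0 -> derivable_pt_lim kap t (dl * ph t)) -> (forall t, 0 <= ph t) ->
  forall t1 t2, 1 <= t1 -> t1 <= t2 -> kap t1 <= kap t2.
Proof. intros Hdl Hd Hp t1 t2 H1 H12. destruct (Req_dec t1 t2). subst; lra.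
 destruct (MVT_cor2 kap (fun t => dl * ph t) t1 t2) as [c [Hc1 Hc2]]. lra. intros; apply Hd; lra.
 assert (0 <= dl * ph c * (t2 - t1)). { apply Rmult_le_pos. apply Rmult_le_pos; auto; lra. lra. } lra. Qed.

Lemma barbalat (kap ph : R -> R) dl M : dl > 0 ->
  (forall t, t > 0 -> derivable_pt_lim kap t (dl * ph t)) -> (forall t, 0 <= ph t) ->
  UCf ph -> (forall t, t >= 0 -> Rabs (kap t) <= M) ->
  forall eps, eps > 0 -> exists T, forall t, t >= T -> ph t < eps.
Proof.
  intros Hdl Hd Hp Huc Hb eps He. apply NNPP. intros Hn.
  assert (Hinf : forall T, exists t, t >= T /\ ph t >= eps).
  { intros T. apply NNPP. intros H2. apply Hn. exists T. intros t Ht. apply Rnot_le_lt. intros H3. apply H2. exists t. split; auto; lra. }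
  destruct (Huc (eps/2)) as [del [Hdel Hu]]. lra.
  set (tau := del / 2). set (c0 := dl * (eps/2) * tau).
  assert (Hc0 : c0 > 0). { unfold c0, tau. apply Rmult_lt_0_compat. apply Rmult_lt_0_compat; lra. lra. }
  assert (Hstep : forall t, 1 <= t -> ph t >= eps -> kap (t + tau) >= kap t + c0).
  { intros t Ht Hpt. destruct (MVT_cor2 kap (fun t => dl * ph t) t (t + tau)) as [c [Hc1 Hc2]].
    unfold tau; lra. intros; apply Hd; lra.
    assert (ph c > eps / 2).
    { assert (Rabs (ph c - ph t) < eps/2). apply Hu; try lra. rewrite Rabs_right. unfold tau in *; lra.
      lra. apply abs_lt_split in H. lra. }
    replace (t + tau - t) with tau in Hc1 by ring. unfold c0.
    assert (dl * (eps/2) * tau <= dl * ph c * tau). { apply Rmult_le_compat_r. unfold tau; lra. apply Rmult_le_compat_l; lra. }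
    lra. }
  assert (Hk : forall k : nat, exists t, 1 <= t /\ kap t >= kap 1 + INR k * c0).
  { induction k. exists 1. simpl. lra.
    destruct IHk as [t [Ht Hkt]]. destruct (Hinf t) as [s [Hs Hps]].
    exists (s + tau). split. unfold tau; lra. rewrite S_INR.
    pose proof (Hstep s ltac:(lra) Hps). pose proof (kappa_mono kap ph dl Hdl Hd Hp t s Ht ltac:(lra)). lra. }
  destruct (INR_unbounded ((2 * M + 1) / c0)) as [k Hk1].
  destruct (Hk k) as [t [Ht Hkt]].
  pose proof (Hb t ltac:(lra)). pose proof (Hb 1 ltac:(lra)). apply abs_le_split in H. apply abs_le_split in H0.
  assert (INR k * c0 > 2 * M + 1).
  { apply (Rmult_lt_compat_r c0) in Hk1; auto. unfold Rdiv in Hk1. rewrite Rmult_assoc, Rinv_l in Hk1; lra. }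
  lra.
Qed.

Lemma small_zero r : (forall eps, eps > 0 -> Rabs r < eps) -> r = 0.
Proof. intros H. destruct (Req_dec r 0); auto. exfalso. pose proof (Rabs_pos_lt r H0).
 specialize (H (Rabs r / 2) ltac:(lra)). lra. Qed.

Lemma cont2_agree d p e F : continuous_map2 d p e F ->
  forall x x' u u', agree d x' x -> agree p u' u -> agree e (F x' u') (F x u).
Proof. intros Hc x x' u u' Hx Hu k Hk. apply Rminus_diag_uniq. apply small_zero. intros eps He.
 destruct (Hc x u eps He) as [del [Hd H]]. specialize (H x' u'). rewrite !vnorm_agree0 in H by auto.
 eapply Rle_lt_trans. 2: apply H; lra. apply (abs_le_vnorm e (vsub (F x' u') (F x u)) k Hk). Qed.

Lemma lip2_agree d p e F : loc_lipschitz2 d p e F ->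
  forall x x' u u', agree d x' x -> agree p u' u -> agree e (F x' u') (F x u).
Proof. intros Hc x x' u u' Hx Hu k Hk. apply Rminus_diag_uniq.
 destruct (Hc x u) as [r [L [Hr H]]]. specialize (H x' u' x u).
 assert (Z : forall d v, agree d v v) by (intros; intro; auto).
 rewrite !vnorm_agree0 in H by auto. rewrite Rplus_0_r, Rmult_0_r in H.
 specialize (H Hr Hr Hr Hr). pose proof (abs_le_vnorm e (vsub (F x' u') (F x u)) k Hk).
 pose proof (Rabs_pos (vsub (F x' u') (F x u) k)). assert (Rabs (vsub (F x' u') (F x u) k) = 0) by lra.
 destruct (Req_dec (vsub (F x' u') (F x u) k) 0); auto. apply Rabs_no_R0 in H3. lra. Qed.

Lemma incidence_sum N a src dst g (Y : nat -> R) : (src g < N)%nat -> (dst g < N)%nat -> src g <> dst g ->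
  sumR N (fun j => incidence a src dst j g * Y j) = sqrt (a (src g) (dst g)) * (Y (dst g) - Y (src g)).
Proof. intros Hs Hd Hne. set (c := sqrt (a (src g) (dst g))).
 rewrite (sumR_ext _ _ (fun j => (if Nat.eq_dec j (src g) then - c * Y j else 0) + (if Nat.eq_dec j (dst g) then c * Y j else 0))).
 rewrite sumR_plus. rewrite (sumR_single N (src g) (fun j => - c * Y j)), (sumR_single N (dst g) (fun j => c * Y j)) by auto. ring.
 intros j Hj. unfold incidence. fold c. destruct (Nat.eq_dec j (src g)); destruct (Nat.eq_dec j (dst g)); try lia; ring. Qed.

Theorem corollary1
  (n q N E : nat) (f : vec -> vec -> vec) (h : vec -> vec) (sigma : R)
  (a : nat -> nat -> R) (src dst : nat -> nat)
  (m : nat -> nat) (psi phi : nat -> vec -> vec -> vec) (delta : nat -> R)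
  (x eta : nat -> R -> vec) (kappa : nat -> R -> R) :
  loc_lipschitz2 n q n f ->
  C1_map n q h ->
  iOFP n q f h sigma ->
  sym_nonneg N a ->
  graph_connected N a ->
  edge_enum N E a src dst ->
  (forall g, (g < E)%nat -> passive_edge (m g) q (psi g) (phi g)) ->
  (forall g, (g < E)%nat -> delta g > 0) ->
  closed_loop_solution n q N E f h (incidence a src dst) m psi phi delta x eta kappa ->
  bounded_solution n N E m x eta kappa ->
  forall i, (i < N)%nat ->
    forall eps, eps > 0 -> exists T, forall t, t >= T ->
      vnorm q (vsub (h (x i t)) (ybar N h x t)) < eps.
Proof.
  intros Hf Hh _ Hsym Hconn Hedge Hpass Hdel Hsol [M HM] i Hi eps Heps.
  set (bI := incidence a src dst) in *.
  destruct Hedge as [He1 [He2 He3]].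
  destruct (FIN (fun g B => forall j, Rabs (bI j g) <= B)) with (E := E) as [Cb HCb].
  { intros g B B' H HB j. eapply Rle_trans; eauto. }
  { intros g Hg. exists (sqrt (a (src g) (dst g))). intros j. unfold bI, incidence.
    pose proof (sqrt_pos (a (src g) (dst g))).
    destruct (Nat.eq_dec j (src g)). rewrite Rabs_Ropp, Rabs_right; lra.
    destruct (Nat.eq_dec j (dst g)). rewrite Rabs_right; lra. rewrite Rabs_R0; lra. }
  destruct (FIN (fun k B => forall z, inbox n M z -> Rabs (h z k) <= B)) with (E := q) as [Bh HBh].
  { intros k B B' H HB z Hz. eapply Rle_trans; eauto. }
  { intros k Hk. destruct (BOX2 n 0 1 (fun z _ => fun _ => h z k)) with (M1 := M) (M2 := 0) as [B HB].
    - intros z u. destruct (hk_loc n (fun z => h z k) (Hh k Hk) z) as [r [L [Hr [HL H]]]].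
      exists r, (L * r). split; auto. intros z' u' Hz' _. rewrite vnorm1. unfold vsub.
      eapply Rle_trans. apply H; auto. apply Rmult_le_compat_l; lra.
    - intros z z' u u' Hz _ j Hj. apply (hk_agree n (fun z => h z k) (Hh k Hk)); auto.
    - exists B. intros z Hz. assert (H0 : inbox 0 0 vzero) by (intros j Hj; lia). exact (HB z vzero Hz H0 0%nat ltac:(lia)). }
  assert (HMr : forall t g k, t >= 0 -> (g < E)%nat -> (k < q)%nat ->
     Rabs (rho_sig q N bI h x g t k) <= INR N * (Cb * Bh)).
  { intros t g k Ht Hg Hk. unfold rho_sig. eapply Rle_trans. apply Rabs_sumR. rewrite <- sumR_const.
    apply sumR_le. intros j Hj. rewrite Rabs_mult. apply Rmult_le_compat; try apply Rabs_pos.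
    apply HCb; auto. apply HBh; auto. intros k' Hk'. apply (proj1 (HM t Ht)); auto. }
  set (Mr := INR N * (Cb * Bh)) in *.
  destruct (FIN (fun g B => forall e r, inbox (m g) M e -> inbox q Mr r -> forall k, (k < q)%nat -> Rabs (phi g e r k) <= B)) with (E := E) as [Bp HBp].
  { intros g B B' H HB e r He Hr k Hk. eapply Rle_trans. apply H; auto. auto. }
  { intros g Hg. destruct (Hpass g Hg) as [_ [Hc _]].
    destruct (BOX2 (m g) q q (phi g)) with (M1 := M) (M2 := Mr) as [B HB].
    - intros z u. destruct (Hc z u 1) as [del [Hd H]]. lra. exists del, 1. split; auto. intros. apply Rlt_le, H; auto.
    - apply cont2_agree; auto.
    - exists B. intros e r He Hr k Hk. eapply HB; eauto. }
  assert (HMu : forall t j k, t >= 0 -> (k < q)%nat ->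
     Rabs (u_sig q N E bI h phi x eta kappa j t k) <= INR E * (Cb * (Bp + M * Mr))).
  { intros t j k Ht Hk. unfold u_sig. rewrite Rabs_Ropp. eapply Rle_trans. apply Rabs_sumR. rewrite <- sumR_const.
    apply sumR_le. intros g Hg. rewrite Rabs_mult. apply Rmult_le_compat; try apply Rabs_pos.
    apply HCb; auto. eapply Rle_trans. apply Rabs_triang. apply Rplus_le_compat.
    apply HBp; auto. intros k' Hk'. apply (proj1 (proj2 (HM t Ht))); auto. intros k' Hk'. apply HMr; auto.
    rewrite Rabs_mult. apply Rmult_le_compat; try apply Rabs_pos. apply (proj2 (proj2 (HM t Ht))); auto.
    apply HMr; auto. }
  set (Mu := INR E * (Cb * (Bp + M * Mr))) in *.
  destruct (BOX2 n q n f) with (M1 := M) (M2 := Mu) as [Bf HBf].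
  { intros z u. destruct (Hf z u) as [r [L [Hr H]]]. exists r, (Rabs L * (2 * r)). split; auto.
    intros z' u' Hz' Hu'. specialize (H z' u' z u Hz' Hu').
    assert (Z : forall d v, agree d v v) by (intros; intro; auto).
    rewrite (vnorm_agree0 n z z), (vnorm_agree0 q u u) in H by auto. specialize (H Hr Hr).
    pose proof (vnorm_nonneg n (vsub z' z)). pose proof (vnorm_nonneg q (vsub u' u)).
    eapply Rle_trans. apply H. eapply Rle_trans. apply Rmult_le_compat_r. lra. apply Rle_abs.
    apply Rmult_le_compat_l. apply Rabs_pos. lra. }
  { apply lip2_agree; auto. }
  assert (HLx0 : forall j k t s, (j < N)%nat -> (k < n)%nat -> 1 <= s -> s <= t ->
     Rabs (x j t k - x j s k) <= Rabs Bf * (t - s)).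
  { intros j k t s Hj Hk Hs Hst. destruct (Req_dec s t). subst. rewrite !Rminus_diag, Rabs_R0; lra.
    destruct (MVT_cor2 (fun s => x j s k) (fun c => f (x j c) (u_sig q N E bI h phi x eta kappa j c) k) s t) as [c [Hc1 Hc2]].
    lra. intros c Hc. apply (Hsol c ltac:(lra)); auto.
    rewrite Hc1, Rabs_mult, (Rabs_right (t - s)) by lra. apply Rmult_le_compat_r. lra.
    eapply Rle_trans. apply HBf; auto. intros k' Hk'; apply (proj1 (HM c ltac:(lra))); auto.
    intros k' Hk'; apply HMu; auto; lra. apply Rle_abs. }
  assert (HLx : forall j k t s, (j < N)%nat -> (k < n)%nat -> 1 <= s -> 1 <= t ->
     Rabs (x j t k - x j s k) <= Rabs Bf * Rabs (t - s)).
  { intros j k t s Hj Hk Hs Ht. destruct (Rle_or_lt s t).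
    rewrite (Rabs_right (t - s)) by lra. auto.
    rewrite Rabs_minus_sym, (Rabs_minus_sym t s), (Rabs_right (s - t)) by lra. apply HLx0; auto; lra. }
  assert (UCy : forall j k, (j < N)%nat -> (k < q)%nat -> UCf (fun t => h (x j t) k)).
  { intros j k Hj Hk ep Hep. destruct (UCbox n (fun z => h z k) (hk_cont n _ (Hh k Hk)) M ep Hep) as [dh [Hdh H]].
    set (K := INR n * Rabs Bf + 1). assert (HK : K > 0). { unfold K. pose proof (pos_INR n). pose proof (Rabs_pos Bf). nra. }
    exists (dh / K). split. apply Rdiv_lt_0_compat; lra. intros t s Ht Hs Hts.
    apply (H (x j s) (x j t)). intros k' Hk'; apply (proj1 (HM s ltac:(lra))); auto.
    eapply Rle_lt_trans. apply (l1_le_bound n _ (Rabs Bf * Rabs (t - s))). intros k' Hk'. unfold vsub. apply HLx; auto.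
    pose proof (pos_INR n). pose proof (Rabs_pos Bf). pose proof (Rabs_pos (t - s)).
    assert (INR n * (Rabs Bf * Rabs (t - s)) <= K * Rabs (t - s)) by (unfold K; nra).
    assert (K * Rabs (t - s) < K * (dh / K)) by (apply Rmult_lt_compat_l; lra).
    replace (K * (dh / K)) with dh in H4 by (field; lra). lra. }
  assert (UCr : forall g k, (g < E)%nat -> (k < q)%nat -> UCf (fun t => rho_sig q N bI h x g t k)).
  { intros g k Hg Hk. apply (UC_sum N (fun j t => bI j g * h (x j t) k)). intros j Hj.
    apply (UC_scal (bI j g) (fun t => h (x j t) k)). apply UCy; auto. }
  assert (UCp : forall g, (g < E)%nat -> UCf (fun t => dot q (rho_sig q N bI h x g t) (rho_sig q N bI h x g t))).
  { intros g Hg. apply (UC_sum q (fun k t => rho_sig q N bI h x g t k * rho_sig q N bI h x g t k)). intros k Hk.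
    apply UC_mult with (A := Mr); auto; intros; apply HMr; auto; lra. }
  assert (Hbar : forall g, (g < E)%nat -> forall ep, ep > 0 -> exists T, forall t, t >= T ->
     dot q (rho_sig q N bI h x g t) (rho_sig q N bI h x g t) < ep).
  { intros g Hg. apply (barbalat (kappa g) _ (delta g) M (Hdel g Hg)).
    - intros t Ht. apply (proj2 (proj2 (Hsol t Ht))); auto.
    - intros t. apply dot_self_nonneg.
    - apply UCp; auto.
    - intros t Ht. apply (proj2 (proj2 (HM t Ht))); auto. }
  assert (Hed : forall g, (g < E)%nat -> forall ep, ep > 0 -> exists T, forall t, t >= T -> forall k, (k < q)%nat ->
     Rabs (h (x (dst g) t) k - h (x (src g) t) k) < ep).
  { intros g Hg ep Hep. destruct (He1 g Hg) as [Hs [Hd [Hne Ha]]].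
    set (c := sqrt (a (src g) (dst g))). assert (Hc : c > 0) by (apply sqrt_lt_R0; lra).
    destruct (Hbar g Hg (ep * c * (ep * c))) as [T HT]. apply Rmult_lt_0_compat; apply Rmult_lt_0_compat; lra.
    exists T. intros t Ht k Hk.
    pose proof (abs_le_vnorm q (rho_sig q N bI h x g t) k Hk).
    assert (vnorm q (rho_sig q N bI h x g t) < ep * c).
    { unfold vnorm. rewrite <- (sqrt_square (ep * c)) by nra. apply sqrt_lt_1_alt. split. apply dot_self_nonneg. apply HT; auto. }
    assert (E1 : rho_sig q N bI h x g t k = c * (h (x (dst g) t) k - h (x (src g) t) k)).
    { unfold rho_sig. unfold bI. apply (incidence_sum N a src dst g (fun j => h (x j t) k)); auto. }
    rewrite E1, Rabs_mult, (Rabs_right c) in H by lra.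
    pose proof (Rabs_pos (h (x (dst g) t) k - h (x (src g) t) k)). nra. }
  set (Close := fun u v => forall ep, ep > 0 -> exists T, forall t, t >= T -> forall k, (k < q)%nat ->
     Rabs (h (x u t) k - h (x v t) k) < ep).
  assert (HCl : forall u v, clos_refl_trans nat
      (fun u v => (u < N)%nat /\ (v < N)%nat /\ u <> v /\ a u v > 0) u v -> Close u v).
  { intros u v Hr. induction Hr as [u v [Hu [Hv [Hne Ha]]] | u | u v w _ IH1 _ IH2].
    - intros ep Hep. destruct (He2 u v Hu Hv Hne Ha) as [g [Hg [[Hs Hd] | [Hs Hd]]]].
      + destruct (Hed g Hg ep Hep) as [T HT]. exists T. intros t Ht k Hk. rewrite Rabs_minus_sym.
        rewrite <- Hs, <- Hd. apply HT; auto.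
      + destruct (Hed g Hg ep Hep) as [T HT]. exists T. intros t Ht k Hk.
        rewrite <- Hs, <- Hd. apply HT; auto.
    - intros ep Hep. exists 0. intros. rewrite Rminus_diag, Rabs_R0. lra.
    - intros ep Hep. destruct (IH1 (ep/2)) as [T1 H1]. lra. destruct (IH2 (ep/2)) as [T2 H2]. lra.
      exists (Rmax T1 T2). intros t Ht k Hk. pose proof (Rmax_l T1 T2). pose proof (Rmax_r T1 T2).
      replace (h (x u t) k - h (x w t) k) with ((h (x u t) k - h (x v t) k) + (h (x v t) k - h (x w t) k)) by ring.
      eapply Rle_lt_trans. apply Rabs_triang. assert (Rabs (h (x u t) k - h (x v t) k) < ep/2) by (apply H1; auto; lra).
      assert (Rabs (h (x v t) k - h (x w t) k) < ep/2) by (apply H2; auto; lra). lra. }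
  set (e1 := eps / (INR q + 1)).
  assert (He1p : e1 > 0) by (unfold e1; apply Rdiv_lt_0_compat; [lra| pose proof (pos_INR q); lra]).
  destruct (FIN (fun j T => forall t, t >= T -> forall k, (k < q)%nat -> Rabs (h (x i t) k - h (x j t) k) < e1)) with (E := N) as [T HT].
  { intros j T T' H HT t Ht. apply H. lra. }
  { intros j Hj. apply (HCl i j (Hconn i j Hi Hj)). auto. }
  exists T. intros t Ht. eapply Rle_lt_trans. apply vnorm_le_l1.
  eapply Rle_lt_trans. apply (l1_le_bound q _ e1).
  - intros k Hk. assert (HN : INR N > 0) by (apply lt_0_INR; lia).
    assert (E2 : vsub (h (x i t)) (ybar N h x t) k = / INR N * sumR N (fun j => h (x i t) k - h (x j t) k)).
    { unfold vsub, ybar. rewrite sumR_minus, sumR_const. field. lra. }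
    rewrite E2, Rabs_mult, Rabs_right by (apply Rle_ge, Rlt_le, Rinv_0_lt_compat; lra).
    eapply Rle_trans. apply Rmult_le_compat_l. left; apply Rinv_0_lt_compat; lra. apply Rabs_sumR.
    eapply Rle_trans. apply Rmult_le_compat_l. left; apply Rinv_0_lt_compat; lra.
    apply (sumR_le N _ (fun _ => e1)). intros j Hj. left. apply HT; auto.
    rewrite sumR_const. right. field. lra.
  - unfold e1. pose proof (pos_INR q). apply (Rmult_lt_reg_r (INR q + 1)). lra.
    replace (INR q * (eps / (INR q + 1)) * (INR q + 1)) with (INR q * eps) by (field; lra). nra.
Qed.
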